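(* Let $c\neq o$ be vertices, and let $\pi^1,\dots,\pi^{P}$ be all the distinct directed paths from $c$ to $o$. For each $k$, let $\bar L^k$ be the principal submatrix of $L$ obtained by deleting the rows and columns indexed by the vertices of $\pi^k$. Then $$e_o^T\operatorname{adj}(sI+L)e_c=\sum_{k=1}^{P}\vartheta(\pi^k)\,\det\big(sI+\bar L^k\big),$$ where the identity matrix in each term has the size of $\bar L^k$, and the determinant of an empty matrix is $1$.
   Context: $\mathcal G$ is a weighted directed graph on $\{1,\dots,N\}$ with adjacency matrix $A=[a_{ij}]$. Here $a_{ij}>0$ if there is an arc from $j$ to $i$, of weight $a_{ij}$, and $a_{ij}=0$ otherwise (no self-loops). The Laplacian is $L=D-A$ with $D=\mathrm{diag}(\sum_j a_{ij})$. A directed path from $u$ to $w$ is a sequence of pairwise distinct vertices $u=v_0,\dots,v_\ell=w$ with an arc from $v_k$ to $v_{k+1}$ for each $k$. Its weight $\vartheta(\pi)$ is the product of its arc weights. $e_i$ is the $i$-th canonical basis vector, and $\operatorname{adj}$ denotes the adjugate matrix. *)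

(* Defs.v *)
From HB Require Import structures.
From mathcomp Require Import all_boot all_order all_algebra.
Set Implicit Arguments. Unset Strict Implicit. Unset Printing Implicit Defensive.
Import Order.TTheory GRing.Theory Num.Theory.
Local Open Scope ring_scope.

(* Convention: A i j > 0 iff there is an arc from j to i, of weight A i j. *)

Definition laplacian (R : pzRingType) (N : nat) (A : 'M[R]_N) : 'M[R]_N :=
  \matrix_(i, j) ((i == j)%:R * \sum_(k < N) A i k) - A.

Definition arc (R : numDomainType) (N : nat) (A : 'M[R]_N) : rel 'I_N :=
  fun u v => 0 < A v u.

Definition is_dpath (R : numDomainType) (N : nat) (A : 'M[R]_N)
    (c o : 'I_N) (q : seq 'I_N) : bool :=
  [&& path (arc A) c q, uniq (c :: q) & last c q == o].

Definition path_weight (R : pzRingType) (N : nat) (A : 'M[R]_N)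
    (c : 'I_N) (q : seq 'I_N) : R :=
  \prod_(x <- zip q (c :: q)) A x.1 x.2.

Definition del_submx (R : Type) (N : nat) (M : 'M[R]_N) (S : {set 'I_N})
  : 'M[R]_#|~: S| :=
  \matrix_(i, j) M (enum_val i) (enum_val j).

(* Main.v *)
Require Import Defs.
From HB Require Import structures.
From mathcomp Require Import all_boot all_order all_algebra.
From mathcomp Require Import fingroup perm.
Set Implicit Arguments. Unset Strict Implicit. Unset Printing Implicit Defensive.
Import Order.TTheory GRing.Theory Num.Theory.
Local Open Scope ring_scope.

Section Gen.
Variable R : comNzRingType.
Variable N : nat.

Definition rep (x o : 'I_N) (C : 'M[R]_N) : 'M[R]_N :=
  \matrix_(i, j) if i == x then (j == o)%:R else C i j.

Lemma cofactor_eq (C D : 'M[R]_N) i j :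
  (forall a b, a != i -> b != j -> C a b = D a b) -> cofactor C i j = cofactor D i j.
Proof.
move=> h; rewrite /cofactor; congr (_ * \det _); apply/matrixP => a b.
by rewrite !mxE h // eq_sym neq_lift.
Qed.

Lemma cofactor_rep (C : 'M[R]_N) x o : cofactor C x o = \det (rep x o C).
Proof.
rewrite (expand_det_row _ x) (bigD1 o) //= big1 => [|j /negPf nj].
  rewrite mxE !eqxx mul1r addr0; apply: cofactor_eq => a b /negPf ha _.
  by rewrite mxE ha.
by rewrite mxE eqxx nj mul0r.
Qed.

Lemma adj_rep (C : 'M[R]_N) x o : \adj C o x = \det (rep x o C).
Proof. by rewrite mxE cofactor_rep. Qed.

Lemma det_zero_row (C : 'M[R]_N) y : (forall j, C y j = 0) -> \det C = 0.
Proof. by move=> h; rewrite (expand_det_row _ y) big1 // => j _; rewrite h mul0r. Qed.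

Lemma det_xrow (C : 'M[R]_N) x y : x != y -> \det (xrow x y C) = - \det C.
Proof.
by move=> h; rewrite xrowE det_mulmx det_perm odd_tperm h expr1 mulN1r.
Qed.

Lemma det_col_split (C G H : 'M[R]_N) x :
  (forall i j, j != x -> C i j = G i j) -> (forall i j, j != x -> C i j = H i j) ->
  (forall i, C i x = G i x + H i x) -> \det C = \det G + \det H.
Proof.
move=> hG hH hs; rewrite !(expand_det_col _ x) -big_split; apply: eq_bigr => i _.
rewrite hs mulrDl; congr (_ * _ + _ * _); apply: cofactor_eq => a b _ hb.
  by rewrite hG.
by rewrite hH.
Qed.


Variable B : 'M[R]_N.
Variable o : 'I_N.

Definition pad (S : {set 'I_N}) : 'M[R]_N :=
  \matrix_(i, j) if (i \in S) || (j \in S) then (i == j)%:R else B i j.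

Lemma step_o S : \det (rep o o (pad S)) = \det (pad (o |: S)).
Proof.
rewrite -cofactor_rep (cofactor_eq (D := pad (o |: S))); last first.
  by move=> a b /negPf ha /negPf hb; rewrite !mxE !inE ha hb.
rewrite cofactor_rep; congr (\det _); apply/matrixP => i j; rewrite !mxE !inE.
by case: eqP => [->|//]; rewrite /= ?eqxx /= eq_sym.
Qed.

Lemma step_claim (S : {set 'I_N}) (x y : 'I_N) : x \notin S -> x != o -> y \notin x |: S ->
  \det (rep y x (rep x o (pad S))) = - \det (rep y o (pad (x |: S))).
Proof.
move=> xS xo; rewrite !inE negb_or => /andP [yx yS].
have xy : x != y by rewrite eq_sym.
set C := rep y x (rep x o (pad S)).
set E := rep y o (pad (x |: S)).
rewrite -(det_xrow E xy).
set G := xrow x y E.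
pose H := \matrix_(i, j) if j == x then C i x - G i x else C i j.
have GE i j : G i j = E (tperm x y i) j by rewrite /G /xrow mxE.
rewrite (det_col_split (G := G) (H := H) (x := x)).
- suff -> : \det H = 0 by rewrite addr0.
  apply: (det_zero_row (y := y)) => j; rewrite !mxE.
  case: ifP => [_|/negbT jx].
    by rewrite ?tpermR !eqxx (negPf xy) !inE eqxx /= subrr.
  by rewrite !eqxx (negPf jx).
- move=> i j jx; rewrite GE /C /E !mxE !inE.
  case: tpermP => [->|->|/eqP ix /eqP iy].
  + by rewrite (negPf xy) !eqxx.
  + by rewrite !eqxx (negPf xy) /= eq_sym.
  + by rewrite (negPf ix) (negPf iy) (negPf jx) /=.
- by move=> i j jx; rewrite /H [in RHS]mxE (negPf jx).
- by move=> i; rewrite /H [in X in _ + X]mxE eqxx addrC subrK.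
Qed.

Lemma step (S : {set 'I_N}) (x : 'I_N) : x \notin S -> x != o ->
  \det (rep x o (pad S)) =
  \sum_y (if y \in x |: S then 0 else - B y x * \det (rep y o (pad (x |: S)))).
Proof.
move=> xS xo; rewrite (expand_det_col _ x); apply: eq_bigr => y _.
case: ifP => hy.
  rewrite !mxE; move: hy; rewrite !inE => /orP [/eqP->|yS].
    by rewrite eqxx (negPf xo) mul0r.
  have yx : y != x by apply: contraNneq xS => <-.
  case: ifP => [/eqP e|_]; first by move: yx; rewrite e eqxx.
  by rewrite yS /= (negPf yx) mul0r.
move: hy; rewrite !inE => /norP [yx yS].
rewrite cofactor_rep step_claim //; last by rewrite !inE negb_or yx yS.
rewrite !mxE.
case: ifP => [/eqP e|_]; first by move: yx; rewrite e eqxx.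
by rewrite (negPf yS) (negPf xS) /= mulrN mulNr.
Qed.

End Gen.
Lemma big_tuple_cons (R : nmodType) (T : finType) n (F : n.+1.-tuple T -> R) :
  \sum_(t : n.+1.-tuple T) F t =
  \sum_(x : T) \sum_(t : n.-tuple T) F [tuple of x :: t].
Proof.
rewrite pair_bigA /=.
rewrite (reindex (fun p : T * n.-tuple T => [tuple of p.1 :: p.2])) //=.
exists (fun t : n.+1.-tuple T => (thead t, [tuple of behead t])).
  by case=> x t _ /=; congr (_, _); apply: val_inj.
by move=> t _; rewrite [in RHS](tuple_eta t).
Qed.

Section Paths.
Variable R : comNzRingType.
Variable N' : nat.
Local Notation N := N'.+1.
Variable B : 'M[R]_N.
Variable o : 'I_N.

Definition pw (x : 'I_N) (q : seq 'I_N) : R :=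
  \prod_(p <- zip q (x :: q)) (- B p.1 p.2).

Definition pcond (S : {set 'I_N}) (x : 'I_N) (q : seq 'I_N) : bool :=
  [&& uniq (x :: q), last x q == o & all (fun v => v \notin S) (x :: q)].

Definition term (S : {set 'I_N}) x (q : seq 'I_N) : R :=
  if pcond S x q then pw x q * \det (pad B (S :|: [set v in x :: q])) else 0.

Definition Sig (S : {set 'I_N}) x : R :=
  \sum_(l < N) \sum_(q : l.-tuple 'I_N) term S x q.

Lemma all_notin_U1 (S : {set 'I_N}) x s :
  all (fun v => v \notin x |: S) s = (x \notin s) && all (fun v => v \notin S) s.
Proof.
elim: s => //= a s ->; rewrite !inE negb_or eq_sym.
by case: (x == a); case: (a \in S); case: (x \in s).
Qed.

Lemma term_cons (S : {set 'I_N}) x y t : x \notin S ->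
  term S x (y :: t) = if y \in x |: S then 0 else - B y x * term (x |: S) y t.
Proof.
move=> xS; rewrite /term.
have [hy|hy] := boolP (y \in x |: S).
  suff -> : pcond S x (y :: t) = false by [].
  rewrite /pcond; move: hy; rewrite !inE => /orP [/eqP ->|yS].
    by rewrite /= inE eqxx.
  by rewrite /= yS /= !andbF.
move: hy; rewrite !inE => /norP [yx yS].
have -> : pcond S x (y :: t) = pcond (x |: S) y t.
  rewrite /pcond all_notin_U1 /= xS /=.
  by case: (x \in y :: t); rewrite ?andbF //= !andbT.
case: ifP => _; last by rewrite mulr0.
rewrite /pw /= big_cons /= mulrA; congr (_ * \det (pad B _)).
by apply/setP => v; rewrite !inE orbA (orbC (v \in S)) -orbA.
Qed.

Lemma size_bound (S : {set 'I_N}) s :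
  uniq s -> all (fun v => v \notin S) s -> (size s <= #|~: S|)%N.
Proof.
move=> us /allP h; rewrite -(card_uniqP us); apply: subset_leq_card.
by apply/subsetP => v /h; rewrite inE.
Qed.

Lemma term_last (S : {set 'I_N}) x (q : seq 'I_N) : x != o -> q = [::] -> term S x q = 0.
Proof. by move=> xo ->; rewrite /term /pcond /= (negPf xo). Qed.

Lemma cardC_U1 (S : {set 'I_N}) x : x \notin S -> #|~: S| = (#|~: (x |: S)|).+1.
Proof.
move=> xS; rewrite (cardsD1 x (~: S)) inE xS add1n; congr (#|_|).+1.
by rewrite setDE setCU setIC.
Qed.

Lemma main_rec k : forall (S : {set 'I_N}) x, (#|~: S| <= k)%N -> x \notin S -> o \notin S ->
  \det (rep x o (pad B S)) = Sig S x.
Proof.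
elim: k => [|k IH] S x hk xS oS.
  by move: hk; rewrite (cardC_U1 xS).
have [-> | xo] := eqVneq x o.
  rewrite step_o /Sig big_ord_recl [X in _ + X]big1 ?addr0; last first.
    move=> i _; apply: big1 => q _; rewrite /term /pcond.
    case: q => [[|y t] //= _]; rewrite inE negb_or.
    case: ifP => //; case/and3P => /andP [/andP [oy ot] _] hl _.
    have : last y t \in y :: t by exact: mem_last.
    rewrite (eqP hl) inE => /orP [/eqP e|h]; [by rewrite e eqxx in oy | by rewrite h in ot].
  rewrite (bigD1 [tuple]) //= big1 ?addr0 => [|q /eqP []]; last exact: tuple0.
  rewrite /term /pcond /= oS eqxx /= /pw big_nil mul1r; congr (\det (pad B _)).
  by apply/setP => v; rewrite !inE orbC.
rewrite step //.
rewrite /Sig [in RHS]big_ord_recl [X in _ = X + _]big1 ?add0r; last first.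
  by move=> q _; apply: term_last; rewrite ?tuple0.
rewrite (_ : \sum_(i < N') \sum_(q : (lift ord0 i).-tuple 'I_N) term S x q =
  \sum_(i < N') \sum_(q : i.+1.-tuple 'I_N) term S x q) //.
under [in RHS]eq_bigr do rewrite big_tuple_cons.
rewrite exchange_big /=; apply: eq_bigr => y _.
have hk' : (#|~: (x |: S)| <= k)%N by move: hk; rewrite (cardC_U1 xS).
have hN : (#|~: (x |: S)| <= N')%N.
  by move: (max_card (mem (~: S))); rewrite card_ord (cardC_U1 xS) ltnS.
case: ifP => hy.
  by rewrite big1 // => i _; rewrite big1 // => t _; rewrite term_cons // hy.
have yn : y \notin x |: S by rewrite hy.
rewrite IH //; last by rewrite !inE negb_or eq_sym xo.
rewrite /Sig [in LHS]big_ord_recr /= [X in _ * (_ + X)]big1 ?addr0 => [|t _]; last first.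
  rewrite /term; case: ifP => // /and3P [u _ a].
  have := size_bound u a; rewrite /= size_tuple.
  by move=> h; have := leq_trans h hN; rewrite ltnn.
rewrite mulr_sumr; apply: eq_bigr => i _; rewrite mulr_sumr; apply: eq_bigr => t _.
by rewrite term_cons // hy.
Qed.

End Paths.

Lemma det_reindex (R : comNzRingType) n N (h : n = N) (g : 'I_n -> 'I_N)
  (ginj : injective g) (P : 'M[R]_N) :
  \det (\matrix_(i, j) P (g i) (g j)) = \det P.
Proof.
subst N; pose p := perm ginj.
have -> : \matrix_(i, j) P (g i) (g j) = row_perm p (col_perm p P).
  by apply/matrixP => i j; rewrite !mxE !permE.
rewrite row_permE col_permE !det_mulmx !det_perm odd_permV mulrCA.
by rewrite -signr_addb addbb expr0 mulr1.
Qed.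

Lemma det_pad_del (R : comNzRingType) N (B : 'M[R]_N) (S : {set 'I_N}) :
  \det (pad B S) = \det (del_submx B S).
Proof.
have h : (#|~: S| + #|S| = N)%N by rewrite addnC cardsC card_ord.
pose g (i : 'I_(#|~: S| + #|S|)) : 'I_N :=
  match split i with inl a => enum_val a | inr b => enum_val b end.
have gL a : g (lshift _ a) = enum_val a by rewrite /g (unsplitK (inl _ a)).
have gR b : g (rshift _ b) = enum_val b by rewrite /g (unsplitK (inr _ b)).
have ginj : injective g.
  move=> i j; case: (split_ordP i) => a ->; case: (split_ordP j) => b ->;
    rewrite ?gL ?gR.
  - by move/enum_val_inj ->.
  - by move=> e; have := enum_valP a; rewrite e in_setC (enum_valP b).
  - by move=> e; have := enum_valP b; rewrite -e in_setC (enum_valP a).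
  - by move/enum_val_inj ->.
rewrite -(det_reindex h ginj).
have -> : \matrix_(i, j) pad B S (g i) (g j) =
          block_mx (del_submx B S) 0 0 1%:M.
  apply/matrixP => i j; case: (split_ordP i) => a ->; case: (split_ordP j) => b ->;
    rewrite ?block_mxEul ?block_mxEur ?block_mxEdl ?block_mxEdr !mxE ?gL ?gR.
  - have := enum_valP a; have := enum_valP b; rewrite !in_setC.
    by move=> /negPf -> /negPf ->.
  - have := enum_valP b => ->; rewrite orbT.
    case: eqP => // e; have := enum_valP a; by rewrite e in_setC (enum_valP b).
  - have := enum_valP a => ->.
    case: eqP => // e; have := enum_valP b; by rewrite -e in_setC (enum_valP a).
  - by rewrite enum_valP (inj_eq enum_val_inj).
by rewrite det_lblock det1 mulr1.
Qed.

Lemma pw_path (R : numFieldType) N' (A : 'M[R]_N'.+1) (hA : forall i j, 0 <= A i j) (s : R)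
  (c : 'I_N'.+1) (q : seq 'I_N'.+1) :
  uniq (c :: q) ->
  pw (s%:M + laplacian A) c q = if path (Defs.arc A) c q then path_weight A c q else 0.
Proof.
elim: q c => [|y q IH] c /=.
  by move=> _; rewrite /pw /path_weight !big_nil.
rewrite inE negb_or => /andP [/andP [cy cq] uq].
have -> : pw (s%:M + laplacian A) c (y :: q) =
          - (s%:M + laplacian A) y c * pw (s%:M + laplacian A) y q.
  by rewrite /pw /= big_cons.
have -> : path_weight A c (y :: q) = A y c * path_weight A y q.
  by rewrite /path_weight /= big_cons.
have yc : (y == c) = false by apply/negbTE; rewrite eq_sym.
rewrite IH // !mxE yc /= mulr0n mul0r add0r sub0r opprK.
rewrite /Defs.arc; have [h|h] := boolP (0 < A y c) => /=.
  by case: ifP => _; rewrite ?mulr0.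
have -> : A y c = 0 by apply/eqP; move: h; rewrite lt0r hA andbT negbK.
by rewrite mul0r.
Qed.

Theorem theorem4 (R : numFieldType) (N : nat) (A : 'M[R]_N)
    (hA : forall i j, 0 <= A i j) (hloop : forall i, A i i = 0)
    (c o : 'I_N) (hco : c != o) (s : R) :
  \adj (s%:M + laplacian A) o c =
  \sum_(l < N) \sum_(q : l.-tuple 'I_N | is_dpath A c o q)
     path_weight A c q *
     \det (s%:M + del_submx (laplacian A) [set x in c :: (q : seq 'I_N)]).
Proof.
move: A hA hloop c o hco; case: N => [|N'] A hA hloop c o hco; first by move: hco; case: c.
set B := s%:M + laplacian A.
have pad0 : pad B set0 = B by apply/matrixP => i j; rewrite !mxE !inE.
rewrite adj_rep -pad0 (@main_rec _ _ B o #|~: (set0 : {set 'I_N'.+1})| set0 c (leqnn _)) ?inE //.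
rewrite /Sig; apply: eq_bigr => l _; rewrite [in RHS]big_mkcond; apply: eq_bigr => q _.
rewrite /term /pcond /is_dpath.
have allS : all (fun v => v \notin (set0 : {set 'I_N'.+1})) (c :: (q : seq _)).
  by apply/allP => v _; rewrite inE.
rewrite allS andbT.
case U : (uniq (c :: (q : seq _))); last by rewrite andbF.
case Lq : (last c q == o); last by rewrite !andbF.
rewrite /= andbT (@pw_path _ _ A hA s c q U).
have -> : \det (pad B (set0 :|: [set v in c :: (q : seq _)])) =
          \det (s%:M + del_submx (laplacian A) [set x in c :: (q : seq _)]).
  rewrite set0U det_pad_del; congr (\det _); apply/matrixP => i j.
  by rewrite !mxE (inj_eq enum_val_inj).
by case: ifP => _; rewrite ?mul0r.
Qed.
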